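(* Let $W:\{0,1\}\to\mathcal{Y}$ and $V:\{0,1\}\to\mathcal{Z}$ be two binary-input discrete memoryless channels such that $\lvert\Delta_{V}\rvert \prec_{icx} \lvert\Delta_{W}\rvert$. Then $\lvert\Delta_{V^-}\rvert \prec_{icx} \lvert\Delta_{W^-}\rvert$ and $\lvert\Delta_{V^+}\rvert \prec_{icx} \lvert\Delta_{W^+}\rvert$.
   Context: For a binary-input discrete memoryless channel (B-DMC) $W:\{0,1\}\to\mathcal{Y}$ with transition probabilities $W(y|x)$, let $q_W(y)=\tfrac12\big(W(y|0)+W(y|1)\big)$ and, for $y$ with $q_W(y)>0$, $\Delta_W(y)=\frac{W(y|0)-W(y|1)}{W(y|0)+W(y|1)}$. With $Y\sim q_W$ (uniform input), $\Delta_W$ denotes the random variable $\Delta_W(Y)\in[-1,1]$ and $\lvert\Delta_W\rvert$ its absolute value. Ar\i kan's polarization transforms synthesize from two independent copies of $W$ the channels $W^-:\{0,1\}\to\mathcal{Y}^2$ and $W^+:\{0,1\}\to\mathcal{Y}^2\times\{0,1\}$ with $W^-(y_1y_2|u_1)=\sum_{u_2\in\{0,1\}}\tfrac12 W(y_1|u_1\oplus u_2)W(y_2|u_2)$ and $W^+(y_1y_2u_1|u_2)=\tfrac12 W(y_1|u_1\oplus u_2)W(y_2|u_2)$. For real random variables $X,Y$, $X\prec_{icx}Y$ (increasing convex order) means $\mathbb{E}[\phi(X)]\le\mathbb{E}[\phi(Y)]$ for all increasing convex functions $\phi$ for which the expectations exist. *)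

(* Defs.v *)
From mathcomp Require Import all_boot all_order all_algebra.
From mathcomp Require Import reals.
Set Implicit Arguments. Unset Strict Implicit. Unset Printing Implicit Defensive.
Import Order.TTheory GRing.Theory Num.Theory.
Local Open Scope ring_scope.

Section BDMC.
Variable R : realType.

(* A binary-input DMC W : {0,1} -> Y, input 0 = false, 1 = true; W x y = W(y|x). *)
Definition is_channel (Y : finType) (W : bool -> Y -> R) : Prop :=
  (forall x y, 0 <= W x y) /\ (forall x, \sum_(y : Y) W x y = 1).

Definition qW (Y : finType) (W : bool -> Y -> R) (y : Y) : R :=
  (W false y + W true y) / 2.

(* Delta_W(y); only used where q_W(y) > 0 (elsewhere its weight is 0). *)
Definition DeltaW (Y : finType) (W : bool -> Y -> R) (y : Y) : R :=
  (W false y - W true y) / (W false y + W true y).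

(* E[phi(|Delta_W|)] with Y ~ q_W, restricted to the support of q_W. *)
Definition expect_absDelta (Y : finType) (W : bool -> Y -> R) (phi : R -> R) : R :=
  \sum_(y : Y | 0 < qW W y) qW W y * phi `|DeltaW W y|.

Definition increasing (phi : R -> R) : Prop := forall x y, x <= y -> phi x <= phi y.

Definition convex (phi : R -> R) : Prop :=
  forall (x y t : R), 0 <= t -> t <= 1 ->
    phi (t * x + (1 - t) * y) <= t * phi x + (1 - t) * phi y.

(* |Delta_V| <_icx |Delta_W| (all expectations are finite sums, hence exist). *)
Definition icx_absDelta (Z Y : finType) (V : bool -> Z -> R) (W : bool -> Y -> R) : Prop :=
  forall phi : R -> R, increasing phi -> convex phi ->
    expect_absDelta V phi <= expect_absDelta W phi.

Definition chan_minus (Y : finType) (W : bool -> Y -> R) : bool -> (Y * Y)%type -> R :=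
  fun u1 yy => \sum_(u2 : bool) (1 / 2) * W (addb u1 u2) yy.1 * W u2 yy.2.

Definition chan_plus (Y : finType) (W : bool -> Y -> R) : bool -> ((Y * Y) * bool)%type -> R :=
  fun u2 yyu => (1 / 2) * W (addb yyu.2 u2) yyu.1.1 * W u2 yyu.1.2.

End BDMC.

(* Main.v *)
Require Import Defs.
From mathcomp Require Import all_boot all_order all_algebra.
From mathcomp Require Import reals ring lra.
Set Implicit Arguments. Unset Strict Implicit. Unset Printing Implicit Defensive.
Import Order.TTheory GRing.Theory Num.Theory.
Local Open Scope ring_scope.

Section Basics.
Variable R : realType.

Lemma qW_ge0 (Y : finType) (U : bool -> Y -> R) :
  (forall x y, 0 <= U x y) -> forall y, 0 <= qW U y.
Proof. move=> h y; rewrite /qW; apply: divr_ge0 => //; exact: addr_ge0. Qed.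

Lemma Delta_le1 (Y : finType) (U : bool -> Y -> R) :
  (forall x y, 0 <= U x y) -> forall y, `|DeltaW U y| <= 1.
Proof.
move=> h y; rewrite /DeltaW normf_div.
have h0 := h false y; have h1 := h true y.
have [e|ne] := eqVneq (U false y + U true y) 0.
  by rewrite e normr0 invr0 mulr0.
have pos : 0 < `|U false y + U true y|.
  by rewrite normr_gt0.
rewrite ler_pdivrMr // mul1r (ger0_norm (addr_ge0 h0 h1)).
rewrite ler_norml; apply/andP; split; lra.
Qed.

Lemma expect_full (Y : finType) (U : bool -> Y -> R) (f : R -> R) :
  (forall y, 0 <= qW U y) ->
  expect_absDelta U f = \sum_(y : Y) qW U y * f `|DeltaW U y|.
Proof.
move=> h; rewrite /expect_absDelta big_mkcond; apply: eq_bigr => y _.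
case: ifP => // /negbT; rewrite -leNgt => hl.
have -> : qW U y = 0 by apply/le_anti; rewrite hl h.
by rewrite mul0r.
Qed.

Lemma decomp (Y : finType) (U : bool -> Y -> R) y :
  U false y + U true y != 0 ->
  U false y = qW U y * (1 + DeltaW U y) /\ U true y = qW U y * (1 - DeltaW U y).
Proof. move=> h; rewrite /qW /DeltaW; split; field; done. Qed.

Lemma zero_sum (Y : finType) (U : bool -> Y -> R) y :
  (forall x y, 0 <= U x y) -> U false y + U true y = 0 ->
  U false y = 0 /\ U true y = 0.
Proof. move=> h e; have := h false y; have := h true y; split; lra. Qed.


Lemma hybrid (Y Z : finType) (V : bool -> Z -> R) (W : bool -> Y -> R) (K : R -> R -> R) :
  (forall z, 0 <= qW V z) -> (forall y, 0 <= qW W y) ->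
  (forall s t, K s t = K t s) ->
  (forall z, `|DeltaW V z| <= 1) -> (forall y, `|DeltaW W y| <= 1) ->
  (forall t, 0 <= t -> t <= 1 ->
     \sum_(z : Z) qW V z * K `|DeltaW V z| t <= \sum_(y : Y) qW W y * K `|DeltaW W y| t) ->
  \sum_(z2 : Z) qW V z2 * (\sum_(z1 : Z) qW V z1 * K `|DeltaW V z1| `|DeltaW V z2|)
  <= \sum_(y2 : Y) qW W y2 * (\sum_(y1 : Y) qW W y1 * K `|DeltaW W y1| `|DeltaW W y2|).
Proof.
move=> qV qW' Ks dV dW H.
apply: (@le_trans _ _ (\sum_(z2 : Z) qW V z2 *
   (\sum_(y1 : Y) qW W y1 * K `|DeltaW W y1| `|DeltaW V z2|))).
  apply: ler_sum => z2 _; apply: ler_wpM2l => //; apply: H => //.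
rewrite (eq_bigr (fun z2 => \sum_(y1 : Y) qW V z2 * (qW W y1 * K `|DeltaW W y1| `|DeltaW V z2|)));
  last by move=> z2 _; rewrite mulr_sumr.
rewrite exchange_big /=; apply: ler_sum => y1 _.
have -> : \sum_(z2 : Z) qW V z2 * (qW W y1 * K `|DeltaW W y1| `|DeltaW V z2|) =
   qW W y1 * \sum_(z2 : Z) qW V z2 * K `|DeltaW V z2| `|DeltaW W y1|.
  rewrite mulr_sumr; apply: eq_bigr => z2 _; rewrite Ks; ring.
apply: ler_wpM2l => //; apply: H => //.
Qed.

Lemma divMl (c x y : R) : c != 0 -> (c * x) / (c * y) = x / y.
Proof. by move=> h; rewrite invfM mulrACA divff // mul1r. Qed.

Lemma minus_q (Y : finType) (U : bool -> Y -> R) y1 y2 :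
  qW (chan_minus U) (y1, y2) = qW U y1 * qW U y2.
Proof. rewrite /qW /chan_minus !big_bool /=. ring. Qed.

Lemma minus_D (Y : finType) (U : bool -> Y -> R) y1 y2 :
  DeltaW (chan_minus U) (y1, y2) = DeltaW U y1 * DeltaW U y2.
Proof.
rewrite /DeltaW /chan_minus !big_bool /=.
set a0 := U false y1; set a1 := U true y1; set b0 := U false y2; set b1 := U true y2.
have -> : 1 / 2 * a1 * b1 + 1 / 2 * a0 * b0 - (1 / 2 * a0 * b1 + 1 / 2 * a1 * b0)
  = 1/2 * ((a0 - a1) * (b0 - b1)) by ring.
have -> : 1 / 2 * a1 * b1 + 1 / 2 * a0 * b0 + (1 / 2 * a0 * b1 + 1 / 2 * a1 * b0)
  = 1/2 * ((a0 + a1) * (b0 + b1)) by ring.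
by rewrite divMl ?mulf_div // mulf_neq0 // ?oner_neq0 // invr_neq0 // pnatr_eq0.
Qed.

Lemma sum_pair (Y : finType) (G : Y * Y -> R) :
  \sum_(p : Y * Y) G p = \sum_(y2 : Y) \sum_(y1 : Y) G (y1, y2).
Proof. by rewrite exchange_big pair_bigA; apply: eq_bigr => -[a b]. Qed.

Lemma minus_expect (Y : finType) (U : bool -> Y -> R) (phi : R -> R) :
  (forall x y, 0 <= U x y) ->
  expect_absDelta (chan_minus U) phi =
  \sum_(y2 : Y) qW U y2 * (\sum_(y1 : Y) qW U y1 * phi (`|DeltaW U y1| * `|DeltaW U y2|)).
Proof.
move=> h.
rewrite expect_full; last first.
  by move=> [a b]; rewrite minus_q; apply: mulr_ge0; apply: qW_ge0.
rewrite sum_pair; apply: eq_bigr => y2 _; rewrite mulr_sumr; apply: eq_bigr => y1 _.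
rewrite minus_q minus_D normrM; ring.
Qed.
Variable phi : R -> R.
Definition Tf (c s : R) := (1 + s * c) * phi (`|s + c| / (1 + s * c)).
Definition Ff (s t : R) := (Tf t s + Tf (- t) s) / 2.

Lemma prod_bound (d1 d2 : R) : `|d1| <= 1 -> `|d2| <= 1 -> - 1 <= d1 * d2 <= 1.
Proof.
move=> h1 h2; rewrite -ler_norml normrM.
apply: (le_trans (ler_wpM2l (normr_ge0 _) h2)); by rewrite mulr1.
Qed.

Lemma plus_alg (Y : finType) (U : bool -> Y -> R) y1 y2 q1 q2 d1 d2 :
  `|d1| <= 1 -> `|d2| <= 1 ->
  U false y1 = q1 * (1 + d1) -> U true y1 = q1 * (1 - d1) ->
  U false y2 = q2 * (1 + d2) -> U true y2 = q2 * (1 - d2) ->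
  \sum_(u : bool) qW (chan_plus U) ((y1, y2), u) * phi `|DeltaW (chan_plus U) ((y1, y2), u)|
  = q1 * q2 * ((Tf d2 d1 + Tf (- d2) d1) / 2).
Proof.
move=> hd1 hd2 e0 e1 f0 f1.
rewrite big_bool /qW /DeltaW /chan_plus /= e0 e1 f0 f1 /Tf.
have -> : 1 / 2 * (q1 * (1 - d1)) * (q2 * (1 + d2)) - 1 / 2 * (q1 * (1 + d1)) * (q2 * (1 - d2))
  = q1 * q2 * (- (d1 - d2)) by field.
have -> : 1 / 2 * (q1 * (1 - d1)) * (q2 * (1 + d2)) + 1 / 2 * (q1 * (1 + d1)) * (q2 * (1 - d2))
  = q1 * q2 * (1 + d1 * - d2) by field.
have -> : 1 / 2 * (q1 * (1 + d1)) * (q2 * (1 + d2)) - 1 / 2 * (q1 * (1 - d1)) * (q2 * (1 - d2))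
  = q1 * q2 * (d1 + d2) by field.
have -> : 1 / 2 * (q1 * (1 + d1)) * (q2 * (1 + d2)) + 1 / 2 * (q1 * (1 - d1)) * (q2 * (1 - d2))
  = q1 * q2 * (1 + d1 * d2) by field.
have [c0|cn] := eqVneq (q1 * q2) 0.
  by rewrite c0 !(mul0r, mulr0, add0r).
have /andP [b1 b2] := prod_bound hd1 hd2.
have p1 : 0 <= 1 + d1 * d2 by lra.
have p2 : 0 <= 1 + d1 * - d2 by rewrite mulrN; lra.
rewrite !divMl // !normf_div normrN (ger0_norm p1) (ger0_norm p2).
ring.
Qed.
Hypothesis phi_inc : increasing phi.
Hypothesis phi_conv : convex phi.

Lemma persp (w1 w2 x1 x2 l : R) : 0 < w1 -> 0 < w2 -> 0 <= l -> l <= 1 ->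
  (l * w1 + (1 - l) * w2) * phi ((l * x1 + (1 - l) * x2) / (l * w1 + (1 - l) * w2))
  <= l * (w1 * phi (x1 / w1)) + (1 - l) * (w2 * phi (x2 / w2)).
Proof.
move=> w1p w2p l0 l1.
set w := l * w1 + (1 - l) * w2.
have wp : 0 < w by rewrite /w; nra.
have wn : w != 0 by rewrite gt_eqF.
have w1n : w1 != 0 by rewrite gt_eqF.
have w2n : w2 != 0 by rewrite gt_eqF.
set th := l * w1 / w.
have t0 : 0 <= th by rewrite /th; apply: divr_ge0; nra.
have t1 : th <= 1 by rewrite /th ler_pdivrMr // mul1r /w; nra.
have e : (l * x1 + (1 - l) * x2) / w = th * (x1 / w1) + (1 - th) * (x2 / w2).
  by rewrite /th /w; field; repeat (apply/andP; split); assumption.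
rewrite e; apply: le_trans (ler_wpM2l (ltW wp) (phi_conv _ _ t0 t1)) _.
have -> : w * (th * phi (x1 / w1) + (1 - th) * phi (x2 / w2)) =
  l * (w1 * phi (x1 / w1)) + (1 - l) * (w2 * phi (x2 / w2)).
  by rewrite /th /w; field; repeat (apply/andP; split); assumption.
by [].
Qed.

Lemma pos_comb (a b l : R) : 0 < a -> 0 < b -> 0 <= l -> l <= 1 -> 0 < l * a + (1 - l) * b.
Proof. move=> *; nra. Qed.

Lemma pos_w (s c : R) : - 1 <= s -> s <= 1 -> - 1 < c -> c < 1 -> 0 < 1 + s * c.
Proof.
move=> s0 s1 c0 c1.
have hs : `|s| <= 1 by rewrite ler_norml s0 s1.
have hc : `|c| < 1 by rewrite ltr_norml c0 c1.
have : `|s * c| <= `|c| by rewrite normrM; apply: ler_piMl.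
rewrite ler_norml => /andP [h _]; lra.
Qed.

Lemma Tf_conv (c s1 s2 l : R) : - 1 < c -> c < 1 ->
  - 1 <= s1 -> s1 <= 1 -> - 1 <= s2 -> s2 <= 1 -> 0 <= l -> l <= 1 ->
  Tf c (l * s1 + (1 - l) * s2) <= l * Tf c s1 + (1 - l) * Tf c s2.
Proof.
move=> c0 c1 a0 a1 b0 b1 l0 l1.
have w1p : 0 < 1 + s1 * c by apply: pos_w.
have w2p : 0 < 1 + s2 * c by apply: pos_w.
have ew : 1 + (l * s1 + (1 - l) * s2) * c = l * (1 + s1 * c) + (1 - l) * (1 + s2 * c) by ring.
have wp : 0 < 1 + (l * s1 + (1 - l) * s2) * c by rewrite ew; apply: pos_comb.
have hn : `|l * s1 + (1 - l) * s2 + c| <= l * `|s1 + c| + (1 - l) * `|s2 + c|.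
  have -> : l * s1 + (1 - l) * s2 + c = l * (s1 + c) + (1 - l) * (s2 + c) by ring.
  apply: le_trans (ler_normD _ _) _.
  rewrite !normrM (ger0_norm l0) (ger0_norm (_ : 0 <= 1 - l)) //; lra.
rewrite /Tf.
have hd : `|l * s1 + (1 - l) * s2 + c| / (1 + (l * s1 + (1 - l) * s2) * c) <=
   (l * `|s1 + c| + (1 - l) * `|s2 + c|) / (1 + (l * s1 + (1 - l) * s2) * c).
  by rewrite ler_pM2r // invr_gt0.
apply: le_trans (ler_wpM2l (ltW wp) (phi_inc hd)) _.
rewrite ew; exact: persp.
Qed.

Lemma Tneg (c s : R) : Tf c (- s) = Tf (- c) s.
Proof.
rewrite /Tf mulNr mulrN.
have -> : - s + c = - (s + - c) by ring.
by rewrite normrN.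
Qed.

Lemma norm_cases (x : R) : `|x| = x \/ `|x| = - x.
Proof. by case: (lerP 0 x) => h; [left; exact: ger0_norm | right; exact: ltr0_norm]. Qed.

Lemma Tsign (c s : R) : Tf c s + Tf (- c) s = Tf `|c| `|s| + Tf (- `|c|) `|s|.
Proof.
case: (norm_cases c) => ->; case: (norm_cases s) => ->;
  rewrite ?Tneg ?opprK //; by rewrite addrC.
Qed.

Lemma Ff_sym (s t : R) : Ff s t = Ff t s.
Proof.
rewrite /Ff /Tf [t + s]addrC [t * s]mulrC !mulrN.
by rewrite [t * s]mulrC (distrC t s).
Qed.

Lemma Ff_even (s t : R) : Ff (- s) t = Ff s t.
Proof. by rewrite /Ff !Tneg opprK addrC. Qed.

Lemma Ff_conv (t s1 s2 l : R) : 0 <= t -> t < 1 ->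
  - 1 <= s1 -> s1 <= 1 -> - 1 <= s2 -> s2 <= 1 -> 0 <= l -> l <= 1 ->
  Ff (l * s1 + (1 - l) * s2) t <= l * Ff s1 t + (1 - l) * Ff s2 t.
Proof.
move=> t0 t1 a0 a1 b0 b1 l0 l1.
have h1 := Tf_conv (_ : - 1 < t) t1 a0 a1 b0 b1 l0 l1.
have h2 := Tf_conv (_ : - 1 < - t) (_ : - t < 1) a0 a1 b0 b1 l0 l1.
rewrite /Ff.
have -> : l * ((Tf t s1 + Tf (- t) s1) / 2) + (1 - l) * ((Tf t s2 + Tf (- t) s2) / 2)
  = ((l * Tf t s1 + (1 - l) * Tf t s2) + (l * Tf (- t) s1 + (1 - l) * Tf (- t) s2)) / 2 by field.
rewrite ler_pM2r ?invr_gt0 //; apply: lerD; [apply: h1 | apply: h2]; lra.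
Qed.

Lemma even_mono (f : R -> R) : (forall s, f (- s) = f s) ->
  (forall x y l, - 1 <= x -> x <= 1 -> - 1 <= y -> y <= 1 -> 0 <= l -> l <= 1 ->
     f (l * x + (1 - l) * y) <= l * f x + (1 - l) * f y) ->
  forall x y, 0 <= x -> x <= y -> y <= 1 -> f x <= f y.
Proof.
move=> fe fc x y x0 xy y1.
have [y0|yn] := eqVneq y 0.
  have x00 : x = 0 by lra.
  by rewrite x00 y0.
have yp : 0 < y by rewrite lt_neqAle eq_sym yn /=; lra.
set l := (y + x) / (2 * y).
have l0 : 0 <= l by rewrite /l; apply: divr_ge0; lra.
have l1 : l <= 1 by rewrite /l ler_pdivrMr; lra.
have := fc y (- y) l (_ : -1 <= y) y1 (_ : -1 <= - y) (_ : - y <= 1) l0 l1.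
rewrite fe (_ : l * y + (1 - l) * - y = x); last by rewrite /l; field.
have -> : l * f y + (1 - l) * f y = f y by ring.
apply; lra.
Qed.
Lemma bigmax_ge (s : seq R) (P : pred R) (F : R -> R) (d i : R) :
  i \in s -> P i -> F i <= \big[Order.max/d]_(j <- s | P j) F j.
Proof.
elim: s => // a s IH; rewrite inE big_cons => /orP [/eqP -> | hi] Pi.
  by rewrite Pi le_max lexx.
case: ifP => _; last exact: IH.
by rewrite le_max IH ?orbT.
Qed.

Lemma bigmin_le (s : seq R) (P : pred R) (F : R -> R) (d i : R) :
  i \in s -> P i -> \big[Order.min/d]_(j <- s | P j) F j <= F i.
Proof.
elim: s => // a s IH; rewrite inE big_cons => /orP [/eqP -> | hi] Pi.
  by rewrite Pi ge_min lexx.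
case: ifP => _; last exact: IH.
by rewrite ge_min IH ?orbT.
Qed.

Lemma bigmax_def (s : seq R) (P : pred R) (F : R -> R) (d : R) :
  d <= \big[Order.max/d]_(j <- s | P j) F j.
Proof.
elim: s => [|a s IH]; first by rewrite big_nil.
rewrite big_cons; case: ifP => // _; by rewrite le_max IH orbT.
Qed.

Lemma max_mono (a b c d : R) : a <= c -> b <= d -> Order.max a b <= Order.max c d.
Proof. by move=> h1 h2; rewrite ge_max !le_max h1 h2 orbT. Qed.

Lemma ext (Y Z : finType) (V : bool -> Z -> R) (W : bool -> Y -> R) (f : R -> R) :
  (forall x y, 0 <= V x y) -> (forall x y, 0 <= W x y) ->
  icx_absDelta V W ->
  (forall x p y, 0 <= x -> x < p -> p < y -> y <= 1 ->
     (y - x) * f p <= (y - p) * f x + (p - x) * f y) ->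
  (forall x y, 0 <= x -> x <= y -> y <= 1 -> f x <= f y) ->
  expect_absDelta V f <= expect_absDelta W f.
Proof.
move=> hV hW hicx fc fm.
pose S := [seq `|DeltaW V z| | z <- enum Z] ++ [seq `|DeltaW W y| | y <- enum Y].
have HS : forall x, x \in S -> 0 <= x /\ x <= 1.
  move=> x; rewrite mem_cat => /orP [] /mapP [w _ ->]; split => //;
  exact: Delta_le1.
pose ch x y := (f y - f x) / (y - x).
pose M p := Order.max 0 (\big[Order.max/0]_(x <- S | x < p) ch x p).
pose sg p := \big[Order.min/M p]_(y <- S | p < y) ch p y.
pose L p x := f p + sg p * (x - p).
pose g x := \big[Order.max/f 0]_(p <- S) L p x.
have slope3 : forall x p y, x \in S -> p \in S -> y \in S -> x < p -> p < y -> ch x p <= ch p y.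
  move=> x p y xS pS yS xp py.
  have [x0 _] := HS x xS; have [_ y1] := HS y yS.
  have h := fc x p y x0 xp py y1.
  rewrite /ch ler_pdivrMr ?subr_gt0 // mulrAC ler_pdivlMr ?subr_gt0 //.
  rewrite -subr_ge0.
  have -> : (f y - f p) * (p - x) - (f p - f x) * (y - p) =
    (y - p) * f x + (p - x) * f y - (y - x) * f p by ring.
  by rewrite subr_ge0.
have sg0 : forall p, p \in S -> 0 <= sg p.
  move=> p pS; rewrite /sg big_seq_cond.
  apply: (big_ind (fun v => 0 <= v)).
  - by rewrite /M le_max lexx.
  - by move=> a b ha hb; rewrite le_min ha hb.
  move=> y /andP [yS py]; rewrite /ch; apply: divr_ge0; last by rewrite subr_ge0 ltW.
  have [p0 _] := HS p pS; have [_ y1] := HS y yS.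
  by rewrite subr_ge0; apply: fm => //; rewrite ltW.
have sgge : forall x p, x \in S -> p \in S -> x < p -> ch x p <= sg p.
  move=> x p xS pS xp; rewrite /sg big_seq_cond.
  apply: (big_ind (fun v => ch x p <= v)).
  - by rewrite /M le_max; apply/orP; right; apply: (@bigmax_ge S (fun j => j < p) (fun j => ch j p) 0 x).
  - by move=> a b ha hb; rewrite le_min ha hb.
  by move=> y /andP [yS py]; apply: slope3.
have sgle : forall p y, y \in S -> p < y -> sg p <= ch p y.
  by move=> p y yS py; apply: bigmin_le.
have Lle : forall p x, p \in S -> x \in S -> L p x <= f x.
  move=> p x pS xS; rewrite /L.
  case: (ltgtP x p) => [xp | px | ->]; last by rewrite subrr mulr0 addr0.
  - have h : sg p * (x - p) <= ch x p * (x - p).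
      by apply: ler_wnM2r; [rewrite subr_le0 ltW | apply: sgge].
    have e : ch x p * (x - p) = f x - f p.
      rewrite /ch; field; by rewrite subr_eq0 gt_eqF.
    rewrite -lerBrDl; by rewrite -e.
  - have h : sg p * (x - p) <= ch p x * (x - p).
      by apply: ler_wpM2r; [rewrite subr_ge0 ltW | apply: sgle].
    have e : ch p x * (x - p) = f x - f p.
      rewrite /ch; field; by rewrite subr_eq0 gt_eqF.
    rewrite -lerBrDl; by rewrite -e.
have f0le : forall x, x \in S -> f 0 <= f x.
  by move=> x xS; have [x0 x1] := HS x xS; apply: fm.
have geq : forall x, x \in S -> g x = f x.
  move=> x xS; apply/le_anti/andP; split.
    rewrite /g big_seq; apply: (big_ind (fun v => v <= f x)).
    - exact: f0le.
    - by move=> a b ha hb; rewrite ge_max ha hb.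
    by move=> p pS; apply: Lle.
  have -> : f x = L x x by rewrite /L subrr mulr0 addr0.
  exact: (@bigmax_ge S xpredT (fun p => L p x) (f 0) x xS isT).
have d0 : forall x, f 0 <= g x.
  by move=> x; rewrite /g; apply: bigmax_def.
have ginc : increasing g.
  move=> u v uv; rewrite /g big_seq [X in _ <= X]big_seq.
  apply: (big_ind2 (fun a b => a <= b)) => //.
    by move=> a b c d h1 h2; apply: max_mono.
  move=> p pS; rewrite /L lerD2l; apply: ler_wpM2l; first exact: sg0.
  by rewrite lerD2r.
have gconv : convex g.
  move=> a1 a2 t t0 t1.
  rewrite {1}/g big_seq; apply: (big_ind (fun v => v <= t * g a1 + (1 - t) * g a2)).
  - have -> : f 0 = t * f 0 + (1 - t) * f 0 by ring.
    by apply: lerD; apply: ler_wpM2l; rewrite ?subr_ge0 //; apply: d0.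
  - by move=> a b ha hb; rewrite ge_max ha hb.
  move=> p pS.
  have -> : L p (t * a1 + (1 - t) * a2) = t * L p a1 + (1 - t) * L p a2 by rewrite /L; ring.
  apply: lerD; apply: ler_wpM2l; rewrite ?subr_ge0 //;
    [exact: (@bigmax_ge S xpredT (fun p => L p a1) (f 0) p pS isT)
    | exact: (@bigmax_ge S xpredT (fun p => L p a2) (f 0) p pS isT)].
have eV : expect_absDelta V f = expect_absDelta V g.
  apply: eq_bigr => z _; rewrite geq //.
  by rewrite mem_cat; apply/orP; left; apply: map_f; rewrite mem_enum.
have eW : expect_absDelta W f = expect_absDelta W g.
  apply: eq_bigr => y _; rewrite geq //.
  by rewrite mem_cat; apply/orP; right; apply: map_f; rewrite mem_enum.
by rewrite eV eW; apply: hicx.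
Qed.
Lemma decomp_all (Y : finType) (U : bool -> Y -> R) y :
  (forall x y, 0 <= U x y) ->
  U false y = qW U y * (1 + DeltaW U y) /\ U true y = qW U y * (1 - DeltaW U y).
Proof.
move=> h; have [e|ne] := eqVneq (U false y + U true y) 0.
  have [e0 e1] := zero_sum h e.
  by rewrite /qW e0 e1 add0r mul0r !mul0r.
exact: decomp.
Qed.

Lemma plus_expect (Y : finType) (U : bool -> Y -> R) :
  (forall x y, 0 <= U x y) ->
  expect_absDelta (chan_plus U) phi =
  \sum_(y2 : Y) qW U y2 * (\sum_(y1 : Y) qW U y1 * Ff `|DeltaW U y1| `|DeltaW U y2|).
Proof.
move=> h.
rewrite expect_full; last first.
  apply: qW_ge0 => x p; rewrite /chan_plus; apply: mulr_ge0 => //.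
  by apply: mulr_ge0 => //; apply: divr_ge0.
have -> : \sum_(p : (Y * Y) * bool) qW (chan_plus U) p * phi `|DeltaW (chan_plus U) p|
  = \sum_(yy : Y * Y) \sum_(u : bool) qW (chan_plus U) (yy, u) * phi `|DeltaW (chan_plus U) (yy, u)|.
  by rewrite pair_bigA; apply: eq_bigr => -[[a b] u].
rewrite sum_pair; apply: eq_bigr => y2 _; rewrite mulr_sumr; apply: eq_bigr => y1 _.
have [e0 e1] := decomp_all y1 h; have [f0 f1] := decomp_all y2 h.
rewrite (plus_alg (Delta_le1 h y1) (Delta_le1 h y2) e0 e1 f0 f1) Tsign /Ff; ring.
Qed.

Lemma chord3 (f : R -> R) :
  (forall x y l, - 1 <= x -> x <= 1 -> - 1 <= y -> y <= 1 -> 0 <= l -> l <= 1 ->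
     f (l * x + (1 - l) * y) <= l * f x + (1 - l) * f y) ->
  forall x p y, 0 <= x -> x < p -> p < y -> y <= 1 ->
     (y - x) * f p <= (y - p) * f x + (p - x) * f y.
Proof.
move=> hc x p y x0 xp py y1.
have yx : 0 < y - x by lra.
have yxn : y - x != 0 by rewrite gt_eqF.
set l := (y - p) / (y - x).
have l0 : 0 <= l by rewrite /l; apply: divr_ge0; lra.
have l1 : l <= 1 by rewrite /l ler_pdivrMr; lra.
have := hc x y l (_ : -1 <= x) (_ : x <= 1) (_ : -1 <= y) y1 l0 l1.
rewrite (_ : l * x + (1 - l) * y = p); last by rewrite /l; field.
move=> /(_ ltac:(lra) ltac:(lra) ltac:(lra)) hh.
apply: le_trans (ler_wpM2l (ltW yx) hh) _.
have -> : (y - x) * (l * f x + (1 - l) * f y) = (y - p) * f x + (p - x) * f y.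
  by rewrite /l; field.
by [].
Qed.

Lemma Tf_one (c s : R) : `|s + c| = 1 + s * c -> Tf c s = (1 + s * c) * phi 1.
Proof.
move=> e; rewrite /Tf e.
have [z|nz] := eqVneq (1 + s * c) 0; first by rewrite z !mul0r.
by rewrite divff.
Qed.

Lemma Ff1 (s : R) : 0 <= s -> s <= 1 -> Ff s 1 = phi 1.
Proof.
move=> s0 s1; rewrite /Ff !Tf_one; first by field.
all: first [rewrite ger0_norm; [ring | lra] | rewrite ler0_norm; [ring | lra]].
Qed.
End Basics.

Theorem theorem1 (R : realType) (Y Z : finType)
    (W : bool -> Y -> R) (V : bool -> Z -> R) :
  is_channel W -> is_channel V ->
  icx_absDelta V W ->
  icx_absDelta (chan_minus V) (chan_minus W) /\
  icx_absDelta (chan_plus V) (chan_plus W).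
Proof.
move=> [hW _] [hV _] H.
have qV := qW_ge0 hV; have qW' := qW_ge0 hW.
have dV := Delta_le1 hV; have dW := Delta_le1 hW.
split.
- move=> phi pi pc; rewrite !minus_expect //.
  apply: (hybrid (K := fun s t => phi (s * t))) => //.
    by move=> s t; rewrite mulrC.
  move=> t t0 t1.
  have := H (fun s => phi (s * t)); rewrite !expect_full //; apply.
    by move=> x y xy; apply: pi; apply: ler_wpM2r.
  move=> x y l l0 l1.
  rewrite (_ : (l * x + (1 - l) * y) * t = l * (x * t) + (1 - l) * (y * t)); last by ring.
  exact: pc.
- move=> phi pi pc; rewrite !plus_expect //.
  apply: (hybrid (K := Ff phi)) => //; first exact: Ff_sym.
  move=> t t0 t1.
  have [te|tn] := eqVneq t 1.
    rewrite te.
    have eV : \sum_(z : Z) qW V z * Ff phi `|DeltaW V z| 1 = expect_absDelta V (fun _ => phi 1).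
      rewrite expect_full //; apply: eq_bigr => z _; rewrite Ff1 //.
    have eW : \sum_(y : Y) qW W y * Ff phi `|DeltaW W y| 1 = expect_absDelta W (fun _ => phi 1).
      rewrite expect_full //; apply: eq_bigr => y _; rewrite Ff1 //.
    rewrite eV eW; apply: H => //.
    move=> x y l l0 l1; rewrite (_ : l * phi 1 + (1 - l) * phi 1 = phi 1) //; ring.
  have tl : t < 1 by rewrite lt_neqAle tn t1.
  have hc : forall x y l, - 1 <= x -> x <= 1 -> - 1 <= y -> y <= 1 -> 0 <= l -> l <= 1 ->
     Ff phi (l * x + (1 - l) * y) t <= l * Ff phi x t + (1 - l) * Ff phi y t.
    by move=> x y l *; apply: Ff_conv.
  have := ext hV hW H (chord3 hc) (even_mono (fun s => Ff_even phi s t) hc).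
  by rewrite !expect_full.
Qed.
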